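(* Let $\mathbb Y=\mathbb R^m$, $g\colon\mathbb X\to\mathbb R^m$ twice continuously differentiable, $D\subset\mathbb R^m$ closed and polyhedral locally around $g(\bar x)$, $\Phi(x):=g(x)-D$, $(\bar x,0)\in\operatorname{gph}\Phi$, $u\in\mathbb S_{\mathbb X}$, and assume SOSCMS$(u)$: every $y^*\in\mathcal N_D(g(\bar x);\nabla g(\bar x)u)$ with $\nabla g(\bar x)^*y^*=0$ and $\nabla^2\langle y^*,g\rangle(\bar x)[u,u]\ge0$ satisfies $y^*=0$. Let $K:=\mathcal N_{\mathcal T_D(g(\bar x))}(\nabla g(\bar x)u)$, $\mathbf T(u):=\mathcal T_{\mathcal T_D(g(\bar x))}(\nabla g(\bar x)u)$, $w_s(u,v):=\nabla g(\bar x)s+\tfrac12\nabla^2g(\bar x)[u,u]-v$. Then: (i) For each $s\in\mathbb X$, $\nabla g(\bar x)^*y^*=0$, $\nabla^2\langle y^*,g\rangle(\bar x)(u)+\nabla g(\bar x)^*z^*=0$, $y^*\in\mathcal N_{\mathbf T(u)}(w_s(u,0))$, $z^*\in\mathcal T_{\mathcal N_{\mathbf T(u)}(w_s(u,0))}(y^* )$ imply $y^*=0$; and for all $x^*,s\in\mathbb X$, $y^*,z^*,v\in\mathbb R^m$ with $\langle y^*,v\rangle\ge0$, $x^*=\nabla^2\langle y^*,g\rangle(\bar x)(u)+\nabla g(\bar x)^*z^*$, $y^*\in\mathcal N_{\mathbf T(u)}(w_s(u,v))\cap\ker\nabla g(\bar x)^*$, $z^*\in\mathcal T_{\mathcal N_{\mathbf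 T(u)}(w_s(u,v))}(y^* )$, there is $\lambda\in K$ with $x^*=\nabla g(\bar x)^*\lambda$. (ii) $\nabla g(\bar x)^*y^*=0$, $\nabla^2\langle y^*,g\rangle(\bar x)(u)+\nabla g(\bar x)^*z^*=0$, $y^*\in K$, $z^*\in\mathcal T_K(y^* )$ imply $y^*=0$; and for all $x^*\in\mathbb X$ with $\langle x^*,u\rangle\ge0$ and $y^*,z^*\in\mathbb R^m$ with $x^*=\nabla^2\langle y^*,g\rangle(\bar x)(u)+\nabla g(\bar x)^*z^*$, $y^*\in K\cap\ker\nabla g(\bar x)^*$, $z^*\in\mathcal T_K(y^* )$, there is $\lambda\in K$ (hence $\lambda\in\mathcal N_D(g(\bar x))$) with $x^*=\nabla g(\bar x)^*\lambda$.
   Context: $D$ polyhedral locally around $y$: $D\cap V$ is a finite union of convex polyhedra for some neighbourhood $V$ of $y$. $\mathcal T_Q$ Bouligand tangent cone, $\mathcal N_Q$ limiting normal cone, $\mathcal N_D(y;w)$ directional limiting normal cone (limits of $\eta_k\in\widehat{\mathcal N}_D(y+t_kw_k)$ with $w_k\to w$, $t_k\searrow0$). $\nabla^2\langle y^*,g\rangle(\bar x)$ Hessian of $x\mapsto\langle y^*,g(x)\rangle$; $\nabla^2\langle y^*,g\rangle(\bar x)[u,u]=\langle u,\nabla^2\langle y^*,g\rangle(\bar x)u\rangle$; $\nabla^2g(\bar x)[u,u]=\sum_i\langle u,\nabla^2\langle e_i,g\rangle(\bar x)u\rangle e_i$. *)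

(* Defs.v *)
From HB Require Import structures.
From mathcomp Require Import all_boot all_order all_algebra.
From mathcomp Require Import all_classical all_reals all_analysis.
Set Implicit Arguments. Unset Strict Implicit. Unset Printing Implicit Defensive.
Import Order.TTheory GRing.Theory Num.Theory.
Import numFieldNormedType.Exports.
Local Open Scope classical_set_scope.
Local Open Scope ring_scope.

Section Defs.
Variable R : realType.

Definition dotv (k : nat) (a b : 'rV[R]_k) : R := \sum_(i < k) a 0 i * b 0 i.

Definition ebasis (k : nat) (j : 'I_k) : 'rV[R]_k := delta_mx 0 j.

Definition tangent_cone (k : nat) (Q : set 'rV[R]_k) (x : 'rV[R]_k) : set 'rV[R]_k :=
  [set w | exists (t : nat -> R) (wk : nat -> 'rV[R]_k),
      [/\ (forall i, 0 < t i), t @ \oo --> (0:R), wk @ \oo --> w &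
          forall i, Q (x + t i *: wk i)]].

(* regular (Frechet) normal cone; empty outside Q *)
Definition reg_normal (k : nat) (Q : set 'rV[R]_k) (x : 'rV[R]_k) : set 'rV[R]_k :=
  [set eta | Q x /\ forall eps : R, 0 < eps ->
      \forall x' \near x, Q x' -> dotv eta (x' - x) <= eps * `|x' - x|].

(* limiting (Mordukhovich) normal cone; empty outside Q *)
Definition lim_normal (k : nat) (Q : set 'rV[R]_k) (x : 'rV[R]_k) : set 'rV[R]_k :=
  [set eta | Q x /\ exists (xk etak : nat -> 'rV[R]_k),
      [/\ (forall i, Q (xk i)), xk @ \oo --> x, etak @ \oo --> eta &
          forall i, reg_normal Q (xk i) (etak i)]].

Definition dir_normal (k : nat) (Q : set 'rV[R]_k) (x w : 'rV[R]_k) : set 'rV[R]_k :=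
  [set eta | exists (t : nat -> R) (wk etak : nat -> 'rV[R]_k),
      [/\ (forall i, 0 < t i), t @ \oo --> (0:R), wk @ \oo --> w,
          etak @ \oo --> eta &
          forall i, reg_normal Q (x + t i *: wk i) (etak i)]].

Definition polyhedron (k : nat) (P : set 'rV[R]_k) : Prop :=
  exists (p : nat) (a : 'I_p -> 'rV[R]_k) (b : 'I_p -> R),
    P = [set z | forall i, dotv (a i) z <= b i].

Definition locally_polyhedral (k : nat) (D : set 'rV[R]_k) (y : 'rV[R]_k) : Prop :=
  exists V : set 'rV[R]_k, nbhs y V /\
    exists (q : nat) (P : 'I_q -> set 'rV[R]_k),
      (forall i, polyhedron (P i)) /\ D `&` V = \bigcup_(i in [set: 'I_q]) P i.

Definition C2 (n m : nat) (g : 'rV[R]_n -> 'rV[R]_m) : Prop :=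
  [/\ (forall x, differentiable g x),
      (forall v x, differentiable ('D_v g) x) &
      (forall v w, continuous ('D_w ('D_v g)))].

Definition jac (n m : nat) (g : 'rV[R]_n -> 'rV[R]_m) (xb s : 'rV[R]_n) : 'rV[R]_m :=
  'D_s g xb.

Definition jacT (n m : nat) (g : 'rV[R]_n -> 'rV[R]_m) (xb : 'rV[R]_n) (y : 'rV[R]_m)
  : 'rV[R]_n := \row_j dotv y ('D_(ebasis j) g xb).

Definition scal (n m : nat) (g : 'rV[R]_n -> 'rV[R]_m) (y : 'rV[R]_m) : 'rV[R]_n -> R :=
  fun x => dotv y (g x).

Definition hessv (n m : nat) (g : 'rV[R]_n -> 'rV[R]_m) (xb : 'rV[R]_n) (y : 'rV[R]_m)
  (u : 'rV[R]_n) : 'rV[R]_n := \row_j 'D_(ebasis j) ('D_u (scal g y)) xb.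

Definition hessq (n m : nat) (g : 'rV[R]_n -> 'rV[R]_m) (xb : 'rV[R]_n) (y : 'rV[R]_m)
  (u : 'rV[R]_n) : R := 'D_u ('D_u (scal g y)) xb.

Definition hessg (n m : nat) (g : 'rV[R]_n -> 'rV[R]_m) (xb u : 'rV[R]_n) : 'rV[R]_m :=
  \row_i hessq g xb (ebasis i) u.

Definition wsv (n m : nat) (g : 'rV[R]_n -> 'rV[R]_m) (xb s u : 'rV[R]_n) (v : 'rV[R]_m)
  : 'rV[R]_m := jac g xb s + 2^-1 *: hessg g xb u - v.

End Defs.

(* Main.v *)
Require Import Defs.
From HB Require Import structures.
From mathcomp Require Import all_boot all_order all_algebra.
From mathcomp Require Import all_classical all_reals all_analysis.
Import Order.TTheory GRing.Theory Num.Theory.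
Import numFieldNormedType.Exports.
Local Open Scope classical_set_scope.
Local Open Scope ring_scope.
Set Implicit Arguments. Unset Strict Implicit. Unset Printing Implicit Defensive.
From mathcomp Require Import lra.

Section A.
Variable R : realType.
Variable k : nat.
Implicit Types a b c : 'rV[R]_k.

Lemma dotvC a b : dotv a b = dotv b a.
Proof. by rewrite /dotv; apply: eq_bigr => i _; rewrite mulrC. Qed.

Lemma dotvDr a b c : dotv a (b + c) = dotv a b + dotv a c.
Proof. by rewrite /dotv -big_split; apply: eq_bigr => i _; rewrite mxE mulrDr. Qed.

Lemma dotvZr a (t : R) b : dotv a (t *: b) = t * dotv a b.
Proof. by rewrite /dotv mulr_sumr; apply: eq_bigr => i _; rewrite mxE mulrCA. Qed.

Lemma dotv0r a : dotv a 0 = 0.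
Proof. by rewrite /dotv big1 // => i _; rewrite mxE mulr0. Qed.

Lemma dotv0l a : dotv 0 a = 0.
Proof. by rewrite dotvC dotv0r. Qed.

Lemma dotvNr a b : dotv a (- b) = - dotv a b.
Proof. by rewrite -scaleN1r dotvZr mulN1r. Qed.

Lemma dotvBr a b c : dotv a (b - c) = dotv a b - dotv a c.
Proof. by rewrite dotvDr dotvNr. Qed.

Lemma dotvDl a b c : dotv (b + c) a = dotv b a + dotv c a.
Proof. by rewrite dotvC dotvDr !(dotvC a). Qed.

Lemma dotvZl a (t : R) b : dotv (t *: b) a = t * dotv b a.
Proof. by rewrite dotvC dotvZr dotvC. Qed.

Lemma dotv_sumr a (I : finType) (f : I -> 'rV[R]_k) :
  dotv a (\sum_i f i) = \sum_i dotv a (f i).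
Proof.
rewrite /dotv; under eq_bigr do rewrite summxE mulr_sumr.
by rewrite exchange_big.
Qed.

Lemma dotv_ebasis (j : 'I_k) a : dotv (@ebasis R k j) a = a 0 j.
Proof.
rewrite /dotv (bigD1 j) //= big1 ?addr0; first by rewrite /ebasis mxE !eqxx mul1r.
by move=> i /negbTE ij; rewrite /ebasis mxE ij andbF mul0r.
Qed.

Lemma cvg_coord {T} (F : set_system T) {FF : Filter F} (f : T -> 'rV[R]_k) a (j : 'I_k) :
  f @ F --> a -> (fun t => f t 0 j) @ F --> a 0 j.
Proof. by move=> fa; apply: (@continuous_cvg _ _ _ F FF f (fun M : 'rV[R]_k => M 0 j) a (@coord_continuous R 1 k 0 j a) fa). Qed.

Lemma cvg_dotv {T} (F : set_system T) {FF : Filter F} (f g : T -> 'rV[R]_k) a b :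
  f @ F --> a -> g @ F --> b -> (fun t => dotv (f t) (g t)) @ F --> dotv a b.
Proof.
move=> fa gb; rewrite /dotv.
have cadd : continuous (fun x : R * R => x.1 + x.2).
  exact: add_continuous.
apply: (@cvg_big R 'I_k +%R 0 (fun=> true) cadd T F (index_enum 'I_k)
  (fun i t => f t 0 i * g t 0 i) (fun i => a 0 i * b 0 i) FF).
by move=> i _; apply: cvgM; apply: cvg_coord.
Qed.

Lemma dotv_continuous a : continuous (dotv a).
Proof. by move=> x; apply: (cvg_dotv (F := nbhs x) (f := fun=> a) (g := id)); [exact: cvg_cst| exact: cvg_id]. Qed.

End A.

Section C.
Variable R : realType.

Lemma D_dot (n m : nat) (f : 'rV[R]_n -> 'rV[R]_m) (y : 'rV[R]_m) x v :
  derivable f x v -> 'D_v (fun z => dotv y (f z)) x = dotv y ('D_v f x).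
Proof.
move=> H; rewrite {2}/derive; apply: cvg_lim => //.
have -> : (fun h : R => h^-1 *: (((fun z => dotv y (f z)) \o shift x) (h *: v) - dotv y (f x)))
  = (fun h : R => dotv y (h^-1 *: ((f \o shift x) (h *: v) - f x))).
  by apply: funext => h; rewrite dotvZr dotvBr.
exact: (cvg_dotv (f := fun=> y) (cvg_cst y) H).
Qed.

Lemma D_lin (n m : nat) (f : 'rV[R]_n -> 'rV[R]_m) x v :
  differentiable f x -> 'D_v f x = \sum_j v 0 j *: 'D_(@ebasis R n j) f x.
Proof.
move=> df; rewrite deriveE //.
under eq_bigr do rewrite deriveE //.
rewrite {1}(row_sum_delta v) linear_sum; apply: eq_bigr => j _.
by rewrite linearZ.
Qed.

Section G.
Variables (n m : nat) (g : 'rV[R]_n -> 'rV[R]_m) (xb : 'rV[R]_n).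
Hypothesis hg : C2 g.

Lemma g_diff x : differentiable g x.
Proof. by case: hg. Qed.

Lemma Dg_diff v x : differentiable ('D_v g) x.
Proof. by case: hg. Qed.

Lemma scalD (y : 'rV[R]_m) u : 'D_u (scal g y) = (fun c => dotv y ('D_u g c)).
Proof. by apply: funext => c; rewrite /scal D_dot //; apply: diff_derivable; apply: g_diff. Qed.

Lemma hessvE y u j : (hessv g xb y u) 0 j = dotv y ('D_(@ebasis R n j) ('D_u g) xb).
Proof.
by rewrite /hessv mxE scalD D_dot //; apply: diff_derivable; apply: Dg_diff.
Qed.

Lemma hessqE y u : hessq g xb y u = dotv y ('D_u ('D_u g) xb).
Proof.
by rewrite /hessq scalD D_dot //; apply: diff_derivable; apply: Dg_diff.
Qed.

Lemma jacT_dot y s : dotv (jacT g xb y) s = dotv y (jac g xb s).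
Proof.
rewrite /jac (D_lin _ (g_diff xb)) dotv_sumr [in LHS]/dotv; apply: eq_bigr => j _.
by rewrite mxE dotvZr mulrC.
Qed.

Lemma hessv_dot y u : dotv (hessv g xb y u) u = hessq g xb y u.
Proof.
rewrite hessqE (D_lin _ (Dg_diff u xb)) dotv_sumr [in LHS]/dotv; apply: eq_bigr => j _.
by rewrite hessvE dotvZr mulrC.
Qed.

Lemma hessg_dot y u : dotv y (hessg g xb u) = hessq g xb y u.
Proof.
rewrite hessqE /dotv; apply: eq_bigr => i _.
by rewrite /hessg mxE hessqE dotv_ebasis.
Qed.

Lemma hessv0 u : hessv g xb 0 u = 0.
Proof. by apply/rowP => j; rewrite hessvE dotv0l mxE. Qed.

End G.

End C.

Section Dn.
Variable R : realType.
Variable k : nat.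
Local Notation V := 'rV[R]_k.

Definition cone (C : set V) := forall (t : R) x, 0 < t -> C x -> C (t *: x).

Lemma scaled_cvg0 (t : nat -> R) (w : nat -> V) (w0 : V) :
  t @ \oo --> (0:R) -> w @ \oo --> w0 -> (fun i => t i *: w i) @ \oo --> (0 : V).
Proof.
move=> t0 ww; rewrite -(scale0r w0).
exact: (cvgZ t0 ww).
Qed.

Lemma tangent_cone_cone (Q : set V) x : cone (tangent_cone Q x).
Proof.
move=> t w t0 [tt [wk [tt0 ttc wkc Qi]]].
exists (fun i => tt i / t), (fun i => t *: wk i); split.
- by move=> i; apply: divr_gt0.
- by rewrite -(mul0r t^-1); apply: cvgM => //; exact: cvg_cst.
- by apply: cvgZ => //; exact: cvg_cst.
- move=> i; rewrite scalerA mulrAC -mulrA mulfV ?mulr1 //.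
  by rewrite gt_eqF.
Qed.

Lemma reg_normal_cone (Q : set V) x : cone (reg_normal Q x).
Proof.
move=> t e t0 [Qx H]; split => // eps eps0.
have := H (eps / t) (divr_gt0 eps0 t0).
apply: filterS => y Hy Qy; have := Hy Qy.
rewrite dotvZl => le1.
have -> : eps * `|y - x| = t * (eps / t * `|y - x|).
  by rewrite mulrA mulrCA mulfV ?mulr1 // gt_eqF.
by rewrite ler_pM2l.
Qed.

Lemma lim_normal_cone (Q : set V) x : cone (lim_normal Q x).
Proof.
move=> t e t0 [Qx [xk [ek [Qk xc ec rk]]]]; split => //.
exists xk, (fun i => t *: ek i); split => //.
- by apply: cvgZ => //; exact: cvg_cst.
- by move=> i; apply: reg_normal_cone.
Qed.

Lemma natSinv_near (e : R) : 0 < e -> \forall N \near \oo, (N.+1%:R : R)^-1 < e.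
Proof. by move=> e0; exact: (@near_infty_natSinv_lt R (PosNum e0)). Qed.

Lemma natSinv_gt0 (N : nat) : 0 < (N.+1%:R : R)^-1.
Proof. by rewrite invr_gt0 ltr0n. Qed.

Lemma cvg_natSinv (f : nat -> V) (l : V) (c : R) : 0 < c ->
  (forall N, `|l - f N| < c * (N.+1%:R)^-1) -> f @ \oo --> l.
Proof.
move=> c0 H; apply/cvgrPdist_lt => e e0.
have := natSinv_near (divr_gt0 e0 c0); apply: filterS => N HN.
apply: (lt_trans (H N)).
by rewrite -ltr_pdivlMl // mulrC.
Qed.

Lemma near_ball (z : V) (e : R) : 0 < e -> \forall y \near z, `|z - y| < e.
Proof. by move=> e0; exact: (@cvgr_dist_lt _ _ _ (nbhs z) _ id z cvg_id _ e0). Qed.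

Lemma lim_normal_closed (Q : set V) x : closed (lim_normal Q x).
Proof.
move=> z zcl.
have ex (e : R) : 0 < e -> exists2 eta, lim_normal Q x eta & `|z - eta| < e.
  move=> e0; have [eta [Heta Hd]] := zcl _ (near_ball z e0).
  by exists eta.
have [eta1 [Qx _] _] := ex 1 ltr01.
have step (N : nat) : exists p : V * V, [/\ reg_normal Q p.1 p.2, Q p.1,
    `|x - p.1| < (N.+1%:R)^-1 & `|z - p.2| < 2 * (N.+1%:R)^-1].
  have [eta [_ [xk [ek [Qk xc ec rk]]]] Hz] := ex _ (natSinv_gt0 N).
  have HH : \forall j \near \oo, `|x - xk j| < (N.+1%:R)^-1 /\ `|eta - ek j| < (N.+1%:R)^-1.
    near=> j; split; near: j.
      exact: (@cvgr_dist_lt _ _ _ _ _ xk x xc _ (natSinv_gt0 N)).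
    exact: (@cvgr_dist_lt _ _ _ _ _ ek eta ec _ (natSinv_gt0 N)).
  have [j [H1 H2]] := filter_ex HH.
  exists (xk j, ek j); split => //=.
  move: (ler_distD eta z (ek j)) => h; apply: (le_lt_trans h).
  rewrite mulr_natl mulr2n; exact: ltrD.
have [f Hf] := choice step.
split => //; exists (fun N => (f N).1), (fun N => (f N).2); split.
- by move=> N; case: (Hf N).
- by apply: (@cvg_natSinv _ _ 1 ltr01) => N; rewrite mul1r; case: (Hf N).
- by apply: (@cvg_natSinv _ _ 2) => // N; case: (Hf N).
- by move=> N; case: (Hf N).
Unshelve. all: by end_near. Qed.

Lemma small_eq0 (a : R) : (forall e, 0 < e -> `|a| <= e) -> a = 0.
Proof.
move=> H; apply/eqP; rewrite -normr_le0.
have [a0|a0] := leP `|a| 0 => //.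
have := H (`|a| / 2); rewrite divr_gt0 // => /(_ isT) h.
lra.
Qed.

Lemma reg_orth (Q : set V) x eta : cone Q -> reg_normal Q x eta -> dotv eta x = 0.
Proof.
move=> cQ [Qx H].
have key (eps : R) : 0 < eps -> `|dotv eta x| <= eps * `|x|.
  move=> e0.
  have cont : (fun s : R => (1 + s) *: x) @ (0:R) --> x.
    rewrite -[X in _ --> X]scale1r; apply: cvgZ; last exact: cvg_cst.
    rewrite -[X in _ --> X]addr0; apply: cvgD; [exact: cvg_cst| exact: cvg_id].
  have H2 : \forall s \near (0:R), (Q ((1+s)*:x) -> dotv eta ((1+s)*:x - x) <= eps * `|(1+s)*:x - x|) := cont _ (H eps e0).
  have H3 : \forall s \near (0:R), `|s| < 1.
    by apply: filterS (@cvgr_dist_lt _ R^o _ (nbhs (0:R^o)) _ id 0 cvg_id _ ltr01) => s; rewrite sub0r normrN.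
  have [d d0 Hd] := (nbhs_normP _ _).1 (filterI H2 H3).
  have Hs (s : R) : `|s| < d -> s * dotv eta x <= eps * (`|s| * `|x|).
    move=> sd; have [] := Hd s; first by rewrite /= sub0r normrN.
    move=> /= Hs1 s1.
    have Q1 : Q ((1 + s) *: x).
      apply: cQ => //; move: s1; rewrite ltr_norml; lra.
    have := Hs1 Q1.
    by rewrite scalerDl scale1r addrAC subrr add0r dotvZr normrZ.
  have d2 : 0 < d / 2 by rewrite divr_gt0.
  have hd2 : `|d / 2| < d by rewrite gtr0_norm //; lra.
  have h1 := Hs _ hd2.
  have h2 : `|- (d / 2)| < d by rewrite normrN.
  have {h2}h2 := Hs _ h2.
  rewrite normrN gtr0_norm // in h1 h2.
  rewrite mulNr in h2.
  have p1 : dotv eta x <= eps * `|x|.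
    by rewrite -(ler_pM2l d2) mulrCA.
  have p2 : - dotv eta x <= eps * `|x|.
    by rewrite -(ler_pM2l d2) mulrCA mulrN.
  by rewrite ler_norml p1 andbT lerNl.
apply: small_eq0 => e e0.
have x1 : 0 < `|x| + 1 by rewrite ltr_wpDl.
apply: (le_trans (key _ (divr_gt0 e0 x1))).
rewrite mulrAC ler_pdivrMr // ler_pM2l //; lra.
Qed.

Lemma lim_cst0 (u : nat -> R) (l : R) : u @ \oo --> l -> (forall i, u i = 0) -> l = 0.
Proof.
move=> ul u0.
have e : u = fun=> 0 by apply: funext.
rewrite e in ul.
by move/cvg_lim: ul => <- //; rewrite lim_cst.
Qed.

Lemma lim_orth (Q : set V) w eta : cone Q -> lim_normal Q w eta -> dotv eta w = 0.
Proof.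
move=> cQ [Qw [xk [ek [Qk xc ec rk]]]].
apply: (lim_cst0 (cvg_dotv ec xc)) => i.
exact: reg_orth (rk i).
Qed.

Lemma tangent_hyper (S : set V) (d y z : V) :
  (forall s, S s -> dotv s d = 0) -> S y -> tangent_cone S y z -> dotv z d = 0.
Proof.
move=> Sd Sy [t [wk [t0 tc wc Si]]].
apply: (lim_cst0 (cvg_dotv wc (cvg_cst d))) => i.
have := Sd _ (Si i); rewrite dotvDl Sd // add0r dotvZl => /eqP.
by rewrite mulf_eq0 gt_eqF //= => /eqP.
Qed.

Lemma tangent0_closed (S : set V) z : cone S -> closed S -> tangent_cone S 0 z -> S z.
Proof.
move=> cS clS [t [wk [t0 tc wc Si]]].
apply: (closed_cvg _ clS _ _ wc); apply: nearW => i.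
have ti : 0 < (t i)^-1 by rewrite invr_gt0.
have := cS _ _ ti (Si i).
by rewrite add0r scalerA mulVf ?scale1r // gt_eqF.
Qed.

Lemma dir_lim (Q : set V) x w eta : closed Q -> dir_normal Q x w eta -> lim_normal Q x eta.
Proof.
move=> clQ [t [wk [ek [t0 tc wc ec rk]]]].
have xc : (fun i => x + t i *: wk i) @ \oo --> x.
  rewrite -[X in _ --> X]addr0; apply: cvgD; first exact: cvg_cst.
  exact: scaled_cvg0 tc wc.
split.
  by apply: (closed_cvg _ clQ _ _ xc); apply: nearW => i; case: (rk i).
exists (fun i => x + t i *: wk i), ek; split => //.
by move=> i; case: (rk i).
Qed.

End Dn.

Section E.
Variable R : realType.
Variable k : nat.
Local Notation V := 'rV[R]_k.

Definition polyunion (T : set V) := exists q (P : 'I_q -> set V),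
  (forall i, polyhedron (P i)) /\ T = \bigcup_(i in [set: 'I_q]) P i.

Lemma near_gt (a : V) (c : V) (b : R) : b < dotv a c -> \forall y \near c, b < dotv a y.
Proof.
move=> bc; have e0 : 0 < dotv a c - b by rewrite subr_gt0.
apply: filterS (@cvgr_dist_lt _ R^o _ (nbhs c) _ (dotv a) _ (@dotv_continuous R k a c) _ e0).
move=> y; rewrite ltr_norml => /andP[_ h]; lra.
Qed.

Lemma near_lt (a : V) (c : V) (b : R) : dotv a c < b -> \forall y \near c, dotv a y < b.
Proof.
move=> bc; have e0 : 0 < b - dotv a c by rewrite subr_gt0.
apply: filterS (@cvgr_dist_lt _ R^o _ (nbhs c) _ (dotv a) _ (@dotv_continuous R k a c) _ e0).
move=> y; rewrite ltr_norml => /andP[h _]; lra.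
Qed.

Lemma polyhedron_closed (P : set V) : polyhedron P -> closed P.
Proof.
move=> [p [a [b ->]]]; rewrite /closed => z zcl i.
rewrite leNgt; apply/negP => H.
have [y [Py Hy]] := zcl _ (near_gt H).
by move: (Py i); rewrite leNgt Hy.
Qed.

Lemma polyunion_closed (T : set V) : polyunion T -> closed T.
Proof.
move=> [q [P [hP ->]]]; apply: closed_bigcup; first exact: finite_finset.
by move=> i _; apply: polyhedron_closed.
Qed.

Lemma polyunion_cone_closed (T : set V) : polyunion T -> closed T.
Proof. exact: polyunion_closed. Qed.

Lemma poly_local (P : set V) (c : V) : polyhedron P ->
  exists Q, [/\ polyhedron Q, cone Q & \forall x \near c, (P x <-> Q (x - c))].
Proof.
move=> [p [a [b ->]]].
have [Pc|nPc] := pselect (forall i, dotv (a i) c <= b i).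
  pose a' i := if dotv (a i) c == b i then a i else 0.
  exists [set w | forall i, dotv (a' i) w <= 0]; split.
  - by exists p, a', (fun=> 0).
  - move=> t w t0 Hw i; rewrite dotvZr.
    by rewrite pmulr_rle0.
  - have Hi (i : 'I_p) : \forall x \near c, (dotv (a i) c != b i -> dotv (a i) x < b i).
      have [e|ne] := eqVneq (dotv (a i) c) (b i).
        by near=> x.
      have lt : dotv (a i) c < b i by rewrite lt_neqAle ne Pc.
      by apply: filterS (near_lt lt) => x h _.
    apply: filterS (@filter_forall _ _ _ _ _ Hi) => x Hx; split => H i; rewrite /a'.
      case: eqP => [e|ne]; last by rewrite dotv0l.
      by rewrite dotvBr e subr_le0.
    move: (H i); rewrite /a'; case: eqP => [e|ne].
      by rewrite dotvBr e subr_le0.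
    move=> _; apply: ltW; apply: Hx; exact/eqP.
have [i0 Hi0] : exists i, ~ (dotv (a i) c <= b i).
  by apply/existsNP.
exists [set w | forall i : 'I_1, dotv (0 : V) w <= -1]; split.
- by exists 1%N, (fun=> 0), (fun=> -1).
- by move=> t w t0 /(_ ord0); rewrite dotv0l ler0N1.
- have lt : b i0 < dotv (a i0) c by rewrite ltNge; apply/negP.
  apply: filterS (near_gt lt) => x Hx; split.
    by move=> /(_ i0); rewrite leNgt Hx.
  by move=> /(_ ord0); rewrite dotv0l ler0N1.
Unshelve. all: by end_near. Qed.

Lemma union_local (C : set V) (c : V) : locally_polyhedral C c ->
  exists T, [/\ polyunion T, cone T & \forall x \near c, (C x <-> T (x - c))].
Proof.
move=> [W [nW [q [P [hP eqP]]]]].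
have step (i : 'I_q) : exists Q, [/\ polyhedron Q, cone Q &
    \forall x \near c, (P i x <-> Q (x - c))].
  exact: poly_local.
have [Qf HQ] := choice step.
exists (\bigcup_(i in [set: 'I_q]) Qf i); split.
- by exists q, Qf; split => // i; case: (HQ i).
- move=> t w t0 [i _ Qi]; exists i => //.
  by case: (HQ i) => _ cQ _; apply: cQ.
- have Hall : \forall x \near c, forall i, (P i x <-> Qf i (x - c)).
    have HQ3 (i : 'I_q) : \forall x \near c, (P i x <-> Qf i (x - c)).
      by case: (HQ i).
    exact: (@filter_forall _ _ (fun i x => (P i x <-> Qf i (x - c))) (nbhs c) _ HQ3).
  apply: filterS (filterI nW Hall) => x [Wx Hx].
  have e : (C `&` W) x <-> (\bigcup_(i in [set: 'I_q]) P i) x by rewrite eqP.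
  split.
    move=> Cx; have [i _ Pi] := e.1 (conj Cx Wx).
    by exists i => //; apply/Hx.
  move=> [i _ Qi]; suff : (C `&` W) x by case.
  by apply/e; exists i => //; apply/Hx.
Qed.

Definition tseq (r : R) (w : V) (i : nat) : R := r / (`|w| + 1) / i.+1%:R.

Lemma tseq_gt0 r w i : 0 < r -> 0 < tseq r w i.
Proof.
move=> r0; rewrite /tseq !divr_gt0 // ?ltr_wpDl //.
Qed.

Lemma tseq_le r w i : 0 < r -> tseq r w i <= r / i.+1%:R.
Proof.
move=> r0; rewrite /tseq ler_pM2r ?invr_gt0 ?ltr0n //.
rewrite ler_pdivrMr ?ler_peMr ?lerDr ?ltr_wpDl //; exact: ltW.
Qed.

Lemma tseq_small r w i : 0 < r -> `|tseq r w i *: w| < r.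
Proof.
move=> r0; rewrite normrZ gtr0_norm ?tseq_gt0 //.
have w1 : 0 < `|w| + 1 by rewrite ltr_wpDl.
apply: (@le_lt_trans _ _ (r / (`|w| + 1) * `|w|)).
  rewrite ler_wpM2r // /tseq ler_pdivrMr ?ltr0n // ler_peMr ?ler1n //.
  by rewrite divr_ge0 // ltW.
rewrite mulrAC ltr_pdivrMr // ltr_pM2l //; lra.
Qed.

Lemma cvg_squeeze0 (t : nat -> R) (r : R) : 0 < r ->
  (forall i, 0 < t i <= r / i.+1%:R) -> t @ \oo --> (0:R).
Proof.
move=> r0 H; apply/(@cvgrPdist_lt _ R^o) => e e0.
apply: filterS (natSinv_near (divr_gt0 e0 r0)) => N HN.
rewrite sub0r normrN; have /andP[t0 tle] := H N.
rewrite gtr0_norm //; apply: (le_lt_trans tle).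
by rewrite -ltr_pdivlMl // mulrC.
Qed.

Lemma shiftK (c v : V) : (c + v) - c = v.
Proof. by rewrite addrC addKr. Qed.

Lemma dist_shift (c v : V) : `|c - (c + v)| = `|v|.
Proof. by rewrite opprD addrA subrr add0r normrN. Qed.

Lemma loc_cone (C T : set V) (c : V) : cone T -> closed T ->
  (\forall x \near c, (C x <-> T (x - c))) -> tangent_cone C c = T.
Proof.
move=> cT clT /(nbhs_normP _ _) [r r0 Hr].
apply/seteqP; split => w.
  move=> [t [wk [t0 tc wc Ci]]].
  have sc := scaled_cvg0 tc wc.
  apply: (closed_cvg _ clT _ _ wc).
  apply: filterS (@cvgr_dist_lt _ _ _ _ _ _ _ sc _ r0) => i hi.
  have Ti : T (t i *: wk i).
    rewrite -[X in T X](shiftK c); apply/(Hr _ _).1/Ci.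
    by rewrite /= dist_shift -normrN -sub0r.
  have ti : 0 < (t i)^-1 by rewrite invr_gt0.
  by have := cT _ _ ti Ti; rewrite scalerA mulVf ?scale1r // gt_eqF.
move=> Tw; exists (tseq r w), (fun=> w); split.
- by move=> i; apply: tseq_gt0.
- by apply: (cvg_squeeze0 r0) => i; rewrite tseq_gt0 // tseq_le.
- exact: cvg_cst.
- move=> i; apply/(Hr _ _).2.
    by rewrite /= dist_shift tseq_small.
  by rewrite shiftK; apply: cT => //; apply: tseq_gt0.
Qed.

Lemma reg_transfer (C T : set V) (c : V) (r : R) x eta (t : R) : cone T ->
  (forall y, `|c - y| < r -> (C y <-> T (y - c))) -> 0 < t -> `|t *: x| < r ->
  reg_normal T x eta -> reg_normal C (c + t *: x) eta.
Proof.
move=> cT Hr t0 txr [Tx H]; split.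
  by apply/Hr; rewrite ?dist_shift ?shiftK //; apply: cT.
move=> eps e0.
pose h := fun y : V => t^-1 *: (y - c).
have ehy y : h y - x = t^-1 *: (y - (c + t *: x)).
  rewrite /h -[X in _ - X = _](_ : t^-1 *: (t *: x) = x); last first.
    by rewrite scalerA mulVf ?scale1r // gt_eqF.
  by rewrite -scalerBr opprD addrA.
have hc : h @ (c + t *: x) --> x.
  apply/(@cvgrPdist_lt _ _ _ (nbhs (c + t *: x)) _ h x) => e' e'0.
  apply: filterS (near_ball (c + t *: x) (mulr_gt0 t0 e'0)) => y hy.
  rewrite distrC ehy normrZ gtr0_norm ?invr_gt0 // ltr_pdivrMl //.
  by rewrite distrC.
have H2 : \forall y \near (c + t *: x), (T (h y) -> dotv eta (h y - x) <= eps * `|h y - x|).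
  exact: hc _ (H eps e0).
have r1 : 0 < r - `|t *: x| by rewrite subr_gt0.
have H3 := near_ball (c + t *: x) r1.
apply: filterS (filterI H2 H3) => y [Hy1 Hy2] Cy.
have cy : `|c - y| < r.
  apply: (le_lt_trans (ler_distD (c + t *: x) c y)).
  by rewrite dist_shift -ltrBrDl.
have Thy : T (h y).
  by apply: cT; [rewrite invr_gt0| apply/Hr].
have := Hy1 Thy; rewrite ehy dotvZr normrZ gtr0_norm ?invr_gt0 //.
rewrite mulrCA ler_pM2l ?invr_gt0 //.
Qed.

Lemma lim_to_dir (C T : set V) (c : V) w eta : cone T ->
  (\forall y \near c, (C y <-> T (y - c))) ->
  lim_normal T w eta -> dir_normal C c w eta.
Proof.
move=> cT /(nbhs_normP _ _) [r r0 Hr] [Tw [xs [es [Ts xc ec rk]]]].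
exists (fun i => tseq r (xs i) i), xs, es; split => //.
- by move=> i; apply: tseq_gt0.
- by apply: (cvg_squeeze0 r0) => i; rewrite tseq_gt0 // tseq_le.
- move=> i; apply: (@reg_transfer C T c r (xs i) (es i) (tseq r (xs i) i) cT).
  + by move=> y hy; apply: (Hr y hy).
  + exact: tseq_gt0.
  + exact: tseq_small.
  + exact: rk.
Qed.

End E.

Unset Implicit Arguments. Set Strict Implicit. Set Printing Implicit Defensive.

Theorem mainTheorem15 (R : realType) (n m : nat)
  (g : 'rV[R]_n -> 'rV[R]_m) (D : set 'rV[R]_m) (xb u : 'rV[R]_n) :
  C2 g ->
  closed D ->
  locally_polyhedral D (g xb) ->
  D (g xb) ->
  dotv u u = 1 ->
  (* SOSCMS(u) *)
  (forall y : 'rV[R]_m, dir_normal D (g xb) (jac g xb u) y ->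
     jacT g xb y = 0 -> 0 <= hessq g xb y u -> y = 0) ->
  let TD := tangent_cone D (g xb) in
  let K := lim_normal TD (jac g xb u) in
  let Tu := tangent_cone TD (jac g xb u) in
  (* (i) *)
  ((forall (s : 'rV[R]_n) (y z : 'rV[R]_m),
      jacT g xb y = 0 ->
      hessv g xb y u + jacT g xb z = 0 ->
      lim_normal Tu (wsv g xb s u 0) y ->
      tangent_cone (lim_normal Tu (wsv g xb s u 0)) y z ->
      y = 0) /\
   (forall (xs s : 'rV[R]_n) (y z v : 'rV[R]_m),
      0 <= dotv y v ->
      xs = hessv g xb y u + jacT g xb z ->
      lim_normal Tu (wsv g xb s u v) y ->
      jacT g xb y = 0 ->
      tangent_cone (lim_normal Tu (wsv g xb s u v)) y z ->
      exists lam, K lam /\ xs = jacT g xb lam)) /\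
  (* (ii) *)
  ((forall (y z : 'rV[R]_m),
      jacT g xb y = 0 ->
      hessv g xb y u + jacT g xb z = 0 ->
      K y ->
      tangent_cone K y z ->
      y = 0) /\
   (forall (xs : 'rV[R]_n), 0 <= dotv xs u ->
    forall (y z : 'rV[R]_m),
      xs = hessv g xb y u + jacT g xb z ->
      K y ->
      jacT g xb y = 0 ->
      tangent_cone K y z ->
      exists lam, [/\ K lam, lim_normal D (g xb) lam & xs = jacT g xb lam])).
Proof.
move=> hg clD lpD Dy u1 SOS TD K Tu.
have [T1 [pu1 cT1 near1]] := union_local lpD.
have eTD : TD = T1 := loc_cone cT1 (polyunion_closed pu1) near1.
have nearD : \forall x \near g xb, (D x <-> TD (x - g xb)) by rewrite eTD.
have cTD : cone TD := @tangent_cone_cone R m D (g xb).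
have clTD : closed TD by rewrite eTD; exact: polyunion_closed.
have lpT : locally_polyhedral TD (jac g xb u).
  move: pu1 => [q [P [hP eP]]].
  exists setT; split; first exact: filterT.
  by exists q, P; split => //; rewrite setIT eTD.
have [T2 [pu2 cT2 near2]] := union_local lpT.
have eTu : Tu = T2 := loc_cone cT2 (polyunion_closed pu2) near2.
have nearT : \forall x \near jac g xb u, (TD x <-> Tu (x - jac g xb u)) by rewrite eTu.
have cTu : cone Tu := @tangent_cone_cone R m TD (jac g xb u).
have Kdir eta : K eta -> dir_normal D (g xb) (jac g xb u) eta.
  exact: lim_to_dir cTD nearD.
have KN eta : K eta -> lim_normal D (g xb) eta.
  by move=> Ke; apply: dir_lim clD (Kdir _ Ke).
have Ksub w eta : lim_normal Tu w eta -> K eta.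
  by move=> H; apply: dir_lim clTD (lim_to_dir cTu nearT H).
have Korth eta : K eta -> dotv eta (jac g xb u) = 0.
  exact: lim_orth cTD.
have Kcone : cone K := @lim_normal_cone R m TD (jac g xb u).
have Kclosed : closed K := @lim_normal_closed R m TD (jac g xb u).
have split_dot (y z : 'rV[R]_m) :
    dotv (hessv g xb y u + jacT g xb z) u = hessq g xb y u + dotv z (jac g xb u).
  by rewrite dotvDl hessv_dot // jacT_dot.
have part1 (y z : 'rV[R]_m) : jacT g xb y = 0 -> hessv g xb y u + jacT g xb z = 0 ->
    K y -> dotv z (jac g xb u) = 0 -> y = 0.
  move=> jy hz Ky dz; apply: SOS => //; first exact: Kdir.
  have := split_dot y z; rewrite hz dotv0l dz addr0 => <-; exact: lexx.
split; split.
- move=> s y z jy hz Sy Tz.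
  have Ky := Ksub _ _ Sy.
  apply: part1 jy hz Ky _.
  by apply: (tangent_hyper _ Sy Tz) => e Se; apply: Korth (Ksub _ _ Se).
- move=> xs s y z v yv exs Sy jy Tz.
  have Ky := Ksub _ _ Sy.
  have wy := lim_orth cTu Sy.
  have y0 : y = 0.
    apply: SOS => //; first exact: Kdir.
    move: wy; rewrite /wsv dotvBr dotvDr dotvZr hessg_dot // -jacT_dot // jy dotv0l add0r.
    move=> h; lra.
  subst y.
  have Sz := tangent0_closed (@lim_normal_cone R m _ _) (@lim_normal_closed R m _ _) Tz.
  exists z; split; first exact: Ksub Sz.
  by rewrite exs hessv0 // add0r.
- move=> y z jy hz Ky Tz.
  exact: part1 jy hz Ky (tangent_hyper Korth Ky Tz).
- move=> xs xs0 y z exs Ky jy Tz.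
  have dz := tangent_hyper Korth Ky Tz.
  have y0 : y = 0.
    apply: SOS => //; first exact: Kdir.
    by move: xs0; rewrite exs split_dot dz addr0.
  subst y.
  have Kz := tangent0_closed Kcone Kclosed Tz.
  exists z; split => //; first exact: KN.
  by rewrite exs hessv0 // add0r.
Qed.
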